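(* Let $\alpha$ be a snowy weak composition and $i$ an index with $\alpha_i>\alpha_{i+1}$. Then $\mathsf{rajcode}(s_i\alpha)=s_i\,\mathsf{rajcode}(\alpha)+e_i$, where $s_i$ swaps the $i$-th and $(i+1)$-th entries and $e_i$ is the weak composition with $1$ in entry $i$ and $0$ elsewhere.
   Context: A weak composition is an infinite sequence of nonnegative integers with finitely many positive entries; it is snowy if its positive entries are distinct. $D(\alpha)=\{(r,c):1\le c\le\alpha_r\}$ (row 1 on top). For a diagram $D$, $\mathsf{snow}(D)$ is built by iterating through rows from bottom to top: in row $r$ take the rightmost cell $(r,c)\in D$ such that column $c$ contains no dark cloud yet; if it exists label it a dark cloud and add snowflake cells at $(r',c)$ for all $r'<r$ with $(r',c)\notin D$. $\mathsf{rajcode}(\alpha)_r$ is the number of cells of $\mathsf{snow}(D(\alpha))$ in row $r$. *)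

(* Defs.v *)
From mathcomp Require Import all_boot.
Set Implicit Arguments. Unset Strict Implicit. Unset Printing Implicit Defensive.

(* A weak composition (alpha_1, alpha_2, ...) with finitely many positive
   entries is represented by the finite list [alpha_1; ...; alpha_n];
   all entries beyond the list are 0.  Rows are indexed from 1. *)
Definition comp_at (a : seq nat) (r : nat) : nat :=
  if r is r'.+1 then nth 0 a r' else 0.

Definition snowy (a : seq nat) : bool := uniq [seq x <- a | 0 < x].

Definition tswap (i r : nat) : nat :=
  if r == i then i.+1 else if r == i.+1 then i else r.

Definition si (i : nat) (a : seq nat) : seq nat :=
  mkseq (fun k => comp_at a (tswap i k.+1)) (maxn (size a) i.+1).

(* the diagram D(alpha) = {(r,c) : 1 <= c <= alpha_r} (row 1 on top) *)
Definition in_D (a : seq nat) (r c : nat) : bool := (1 <= c) && (c <= comp_at a r).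

(* processing row r, given the dark clouds cl already placed (in lower rows):
   the rightmost cell (r,c) of D whose column c holds no dark cloud yet
   becomes a dark cloud. *)
Definition row_cand (a : seq nat) (cl : seq (nat * nat)) (r : nat) : seq nat :=
  [seq c <- iota 1 (comp_at a r) | c \notin map snd cl].

Definition dark_step (a : seq nat) (cl : seq (nat * nat)) (r : nat) :=
  match row_cand a cl r with
  | [::] => cl
  | c0 :: s => (r, last c0 s) :: cl
  end.

(* all dark clouds, iterating through rows from bottom (row size a) to top (row 1);
   rows below size a are empty and create no dark cloud *)
Definition dark_clouds (a : seq nat) : seq (nat * nat) :=
  foldl (dark_step a) [::] (rev (iota 1 (size a))).

Definition is_snowflake (a : seq nat) (r c : nat) : bool :=
  (1 <= r) && ~~ in_D a r c && has (fun p => (r < p.1) && (p.2 == c)) (dark_clouds a).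

Definition in_snow (a : seq nat) (r c : nat) : bool := in_D a r c || is_snowflake a r c.

(* all columns of snow(D(alpha)) are <= max alpha *)
Definition col_bound (a : seq nat) : nat := foldr maxn 0 a.

Definition rajcode (a : seq nat) (r : nat) : nat :=
  count (in_snow a r) (iota 1 (col_bound a)).

(* Main.v *)
Require Import Defs.
From mathcomp Require Import all_boot.
From mathcomp Require Import zify.
Set Implicit Arguments. Unset Strict Implicit.

Definition dist (a : seq nat) := forall r r', 1 <= r -> 1 <= r' -> r <> r' ->
  0 < comp_at a r -> comp_at a r <> comp_at a r'.

Lemma snowy_neq (s : seq nat) i j : uniq [seq x <- s | 0 < x] -> i < j -> j < size s ->
  0 < nth 0 s i -> nth 0 s i <> nth 0 s j.
Proof.
elim: s i j => [|x s IH] i j //= Hu Hij Hj Hp.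
case: i Hij Hp => [|i] Hij Hp.
- case: j Hij Hj => [|j] // _ Hj /=.
  move=> /= Hx; rewrite /= Hp /= in Hu; move/andP: Hu => [Hn _].
  move/negP: Hn; apply; rewrite mem_filter Hp Hx mem_nth //.
- case: j Hij Hj => [|j] // Hij Hj /=.
  apply: IH => //. by case: (0 < x) Hu => // /andP [].
Qed.

Lemma snowy_dist a : snowy a -> dist a.
Proof.
move=> Hs r r' Hr Hr' Hne.
case: r Hr Hne => [|r] //; case: r' Hr' => [|r'] // _ _ Hne /= Hp Heq.
have [Hlt|Hlt] : r < r' \/ r' < r by lia.
- have Hsz : r' < size a.
    rewrite ltnNge; apply/negP => Hle; move: Heq; rewrite (nth_default 0 Hle); lia.
  exact: (@snowy_neq a r r' Hs Hlt Hsz Hp Heq).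
- have Hsz : r < size a.
    rewrite ltnNge; apply/negP => Hle; move: Hp; rewrite (nth_default 0 Hle); lia.
  apply: (@snowy_neq a r' r Hs Hlt Hsz); [rewrite -Heq // | by rewrite Heq].
Qed.

Definition Lfun a m k := [seq (r, comp_at a r) | r <- [seq r <- iota m k | 0 < comp_at a r]].

Lemma dark_foldr a m k : 1 <= m -> dist a ->
  foldr (fun x z => dark_step a z x) [::] (iota m k) = Lfun a m k.
Proof.
move=> + Hd; elim: k m => [|k IH] m Hm //=.
rewrite IH; last lia.
rewrite /dark_step /row_cand /Lfun.
case Ha: (comp_at a m) => [|n]; first by rewrite /= Ha.
rewrite (_ : iota 1 n.+1 = rcons (iota 1 n) (1 + n)); last by rewrite -[n.+1]addn1 iotaD cats1.
rewrite filter_rcons.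
rewrite [in RHS]/= Ha /=.
have -> : (1 + n \notin [seq i.2 | i <- [seq (r, comp_at a r) | r <- [seq r <- iota m.+1 k | 0 < comp_at a r]]]).
  apply/negP => /mapP [[r c] /mapP [r' + [-> ->]] /= Hc].
  rewrite mem_filter mem_iota => /andP [Hp Hr].
  apply: (Hd m r') => //; lia.
rewrite Ha add1n.
case: [seq c <- iota 1 n | _] => [|c0 s] //=.
by rewrite last_rcons.
Qed.

Lemma dark_cloudsE a : dist a -> dark_clouds a = Lfun a 1 (size a).
Proof. by move=> Hd; rewrite /dark_clouds foldl_rev dark_foldr. Qed.

Lemma comp_at_big a r : size a < r -> comp_at a r = 0.
Proof. case: r => [|r] //= H; apply: nth_default; lia. Qed.

Lemma hasE a r c : dist a ->
  has (fun p => (r < p.1) && (p.2 == c)) (dark_clouds a) <->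
  exists r', r < r' /\ 0 < comp_at a r' /\ comp_at a r' = c.
Proof.
move=> Hd; rewrite dark_cloudsE // /Lfun has_map; split.
- move/hasP => [r' + /= /andP [Hr /eqP Hc]]; rewrite mem_filter => /andP [Hp _].
  by exists r'.
- move=> [r' [Hr [Hp Hc]]]; apply/hasP; exists r' => /=.
    rewrite mem_filter Hp mem_iota /=; have : r' <= size a.
      rewrite leqNgt; apply/negP => H; move: Hp; rewrite comp_at_big //.
    move: Hp; case: r' {Hr Hc} => //= r' _; lia.
  by rewrite Hr Hc eqxx.
Qed.

Lemma in_snowP a r c : dist a ->
  reflect ((1 <= c <= comp_at a r) \/
           (1 <= r /\ comp_at a r < c /\ exists r', r < r' /\ comp_at a r' = c))
          (in_snow a r c).
Proof.
move=> Hd; rewrite /in_snow /is_snowflake /in_D.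
apply: (iffP idP).
- case/orP => [H|/andP [/andP [Hr HD] Hh]]; first by left.
  move/(hasE r c Hd): Hh => [r' [Hr' [Hp Hc]]].
  right; split => //; split; last by exists r'.
  move: HD; rewrite -Hc; lia.
- case => [->//|[Hr [Hc [r' [Hr' Hc']]]]].
  apply/orP; right; rewrite Hr /=; apply/andP; split; first by lia.
  apply/(hasE r c Hd); exists r'; split => //; split => //; lia.
Qed.

Lemma comp_si a i r : 0 < i -> comp_at (si i a) r = comp_at a (tswap i r).
Proof.
move=> Hi; case: r => [|k] /=.
  by rewrite /tswap; case: ifP => [/eqP H|]; [lia|].
rewrite /si; case: (ltnP k (maxn (size a) i.+1)) => Hk.
  by rewrite nth_mkseq.
rewrite nth_default ?size_mkseq //.
rewrite /tswap; have -> : (k.+1 == i) = false by lia.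
have -> : (k.+1 == i.+1) = false by lia.
rewrite /= nth_default //; lia.
Qed.

Lemma tswapK i r : tswap i (tswap i r) = r.
Proof. rewrite /tswap; do ! case: eqP; lia. Qed.

Lemma tswap_pos i r : 0 < i -> (1 <= tswap i r) = (1 <= r).
Proof. move=> Hi; rewrite /tswap; do ! case: eqP; lia. Qed.

Lemma dist_si a i : 0 < i -> dist a -> dist (si i a).
Proof.
move=> Hi Hd r r' Hr Hr' Hne; rewrite !comp_si //; apply: Hd.
- by rewrite tswap_pos.
- by rewrite tswap_pos.
- by move=> H; apply: Hne; rewrite -(tswapK i r) H tswapK.
Qed.

Lemma nth_le_cb a k : nth 0 a k <= col_bound a.
Proof. elim: a k => [|x a IH] [|k] //=; [exact: leq_maxl | rewrite leq_max IH orbT //]. Qed.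

Lemma comp_le_cb a r : comp_at a r <= col_bound a.
Proof. case: r => //= r; exact: nth_le_cb. Qed.

Lemma cbP a m : (forall k, nth 0 a k <= m) -> col_bound a <= m.
Proof.
elim: a => [|x a IH] //= H; rewrite geq_max (H 0) /=.
by apply: IH => k; exact: (H k.+1).
Qed.

Lemma cb_si a i : 0 < i -> col_bound (si i a) = col_bound a.
Proof.
move=> Hi; apply/eqP; rewrite eqn_leq; apply/andP; split.
- apply: cbP => k; have := comp_si a k.+1 Hi => /= ->; exact: comp_le_cb.
- apply: cbP => k; have := comp_si a (tswap i k.+1) Hi; rewrite tswapK /= => <-.
  exact: comp_le_cb.
Qed.

Lemma tswapE i r : r != i -> r != i.+1 -> tswap i r = r.
Proof. by rewrite /tswap => /negbTE -> /negbTE ->. Qed.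

Lemma tswap_gt i r r' : r != i -> r != i.+1 -> r < r' -> r < tswap i r'.
Proof. rewrite /tswap; do ! case: eqP; lia. Qed.

Theorem corollary4p19 (a : seq nat) (i : nat) :
  0 < i -> snowy a -> comp_at a i.+1 < comp_at a i ->
  forall r : nat, rajcode (si i a) r = rajcode a (tswap i r) + (r == i).
Proof.
move=> Hi Hs Hlt r.
have Hd := snowy_dist Hs.
have Hdb := dist_si Hi Hd.
have Hti : tswap i i = i.+1 by rewrite /tswap eqxx.
have Hti1 : tswap i i.+1 = i by rewrite /tswap (_ : (i.+1 == i) = false) ?eqxx //; lia.
rewrite /rajcode cb_si //.
case: (eqVneq r i) => [->|Hri].
- rewrite Hti addn1.
  have Heq : in_snow (si i a) i =1 predU (in_snow a i.+1) (pred1 (comp_at a i)).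
    move=> c /=; apply/(in_snowP _ _ Hdb)/orP; rewrite !comp_si // Hti.
    + case => [H|[_ [Hc [r' [Hr' Hc']]]]]; first by left; apply/(in_snowP _ _ Hd); left.
      rewrite comp_si // in Hc'.
      case: (eqVneq r' i.+1) => [Er|Nr].
        by right; apply/eqP; rewrite -Hc' Er Hti1.
      left; apply/(in_snowP _ _ Hd); right; split => //; split => //.
      exists r'; split; first lia.
      by rewrite -Hc' tswapE //; lia.
    + case => [/(in_snowP _ _ Hd) [H|[_ [Hc [r' [Hr' Hc']]]]]|/eqP ->].
      * by left.
      * right; split => //; split => //; exists r'; split; first lia.
        rewrite comp_si // tswapE //; lia.
      * right; split => //; split => //; exists i.+1; split => //; by rewrite comp_si // Hti1.
  rewrite (eq_count Heq).
  have H0 : count (predI (in_snow a i.+1) (pred1 (comp_at a i))) (iota 1 (col_bound a)) = 0.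
    apply/eqP; rewrite -leqn0 leqNgt -has_count; apply/hasP => [[c _ /= /andP [+ /eqP Ec]]].
    move/(in_snowP _ _ Hd) => [H|[_ [_ [r' [Hr' Hc']]]]]; first lia.
    subst c.
    apply: (Hd i r') => //; lia.
  have := count_predUI (in_snow a i.+1) (pred1 (comp_at a i)) (iota 1 (col_bound a)).
  rewrite H0 addn0 => ->; rewrite -[RHS]addn1; congr (_ + _).
  rewrite count_uniq_mem ?iota_uniq // mem_iota.
  have := comp_le_cb a i; lia.
- rewrite addn0.
  case: (eqVneq r i.+1) => [->|Hri1].
  + rewrite Hti1; apply: eq_count => c.
    apply/(in_snowP _ _ Hdb)/(in_snowP _ _ Hd); rewrite !comp_si // Hti1.
    * case => [H|[_ [Hc [r' [Hr' Hc']]]]]; first by left.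
      rewrite comp_si // in Hc'.
      right; split => //; split => //; exists r'; split; first lia.
      by rewrite -Hc' tswapE //; lia.
    * case => [H|[_ [Hc [r' [Hr' Hc']]]]]; first by left.
      case: (eqVneq r' i.+1) => [Er|Nr]; first by move: Hc'; rewrite Er; lia.
      right; split => //; split => //; exists r'; split; first lia.
      by rewrite comp_si // tswapE //; lia.
  + have Htr : tswap i r = r by rewrite /tswap (negbTE Hri) (negbTE Hri1).
    rewrite Htr; apply: eq_count => c.
    apply/(in_snowP _ _ Hdb)/(in_snowP _ _ Hd); rewrite !comp_si // Htr.
    * case => [H|[Hr [Hc [r' [Hr' Hc']]]]]; first by left.
      rewrite comp_si // in Hc'.
      right; split => //; split => //; exists (tswap i r'); split => //.
      exact: tswap_gt.
    * case => [H|[Hr [Hc [r' [Hr' Hc']]]]]; first by left.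
      right; split => //; split => //; exists (tswap i r'); split; last by rewrite comp_si // tswapK.
      exact: tswap_gt.
Qed.
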